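(* Let $p$ be a prime, $\omega_1=e^{2\pi i/p}$, $F\in\mathbb Z[x]$, and $H(x)=\prod_{j=0}^{p-1}F(x\omega_1^j)$. Then $H(x)=g(x^p)$ for some $g\in\mathbb Z[x]$ with $g(x)\equiv F(x)\pmod p$, and $N_i(F)=N_{i-1}(g)$ for all $i\geq 2$, and $F(1)N_1(F)=g(1)$. If moreover $p=3$ and $F(x)=f_0(x^3)+xf_1(x^3)+x^2f_2(x^3)$ with $f_0,f_1,f_2\in\mathbb Z[x]$, then $g(x)=f_0(x)^3+xf_1(x)^3+x^2f_2(x)^3-3xf_0(x)f_1(x)f_2(x)$.
   Context: For $k\geq1$, $\omega_k=e^{2\pi i/p^k}$ and $N_k(F)=\prod_{1\leq \ell\leq p^k,\ p\nmid \ell}F(\omega_k^\ell)$. *)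

(* Defs.v *)
From Stdlib Require Import Reals.
From HB Require Import structures.
From mathcomp Require Import all_boot all_order all_algebra.
From mathcomp Require Import complex.
From mathcomp Require Import Rstruct.
Set Implicit Arguments. Unset Strict Implicit. Unset Printing Implicit Defensive.
Import Order.TTheory GRing.Theory Num.Theory.
Local Open Scope ring_scope.

Notation C := (complex Rdefinitions.R).

Definition omega (p k : nat) : C :=
  Complex (Rtrigo_def.cos (2 * Rtrigo1.PI / (p ^ k)%:R))
          (Rtrigo_def.sin (2 * Rtrigo1.PI / (p ^ k)%:R)).

Definition polyC_of_int (F : {poly int}) : {poly C} := map_poly (fun z : int => z%:~R) F.

Definition Nk (p k : nat) (F : {poly int}) : C :=
  \prod_(1 <= l < (p ^ k).+1 | ~~ (p %| l)%N) (polyC_of_int F).[omega p k ^+ l].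

Definition Hpoly (p : nat) (F : {poly int}) : {poly C} :=
  \prod_(j < p) (polyC_of_int F \Po ('X * (omega p 1 ^+ j)%:P)).

(* Main.v *)
From Stdlib Require Import Reals.
Require Import Defs.
From HB Require Import structures.
From mathcomp Require Import all_boot all_order all_algebra.
From mathcomp Require Import complex.
From mathcomp Require Import Rstruct.
From mathcomp Require Import zify ring lra.
Import Order.TTheory GRing.Theory Num.Theory.
Local Open Scope ring_scope.
Set Implicit Arguments. Unset Strict Implicit. Unset Printing Implicit Defensive.
Definition ee (x : Rdefinitions.R) : C := Complex (Rtrigo_def.cos x) (Rtrigo_def.sin x).
Arguments ee x%_ring_scope.
Lemma IZR2 : IZR 2 = 2%:R :> Rdefinitions.R.
Proof. change (IZR 2 = Rplus (IZR 1) (IZR 1)). by rewrite -plus_IZR. Qed.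
Lemma eeD a b : ee a * ee b = ee (a + b).
Proof.
rewrite /ee /GRing.mul /=.
have h1 := cos_plus a b. have h2 := sin_plus a b.
rewrite [cos (a+b)]h1 [sin (a+b)]h2 ?RmultE ?RminusE ?RplusE.
congr Complex. ring.
Qed.
Lemma ee0 : ee 0 = 1.
Proof. by rewrite /ee cos_0 sin_0. Qed.
Lemma eeX x m : ee x ^+ m = ee (m%:R * x).
Proof.
elim: m => [|m IH]; first by rewrite expr0 mul0r ee0.
by rewrite exprS IH eeD -{1}(mul1r x) -mulrDl -natr1 addrC.
Qed.
Lemma PIgt0 : 0 < PI :> Rdefinitions.R.
Proof. by apply/RltP; exact: PI_RGT_0. Qed.
Lemma ee2PI : ee (2%:R * PI) = 1.
Proof. by rewrite /ee -IZR2 -RmultE cos_2PI sin_2PI. Qed.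
Lemma ee_neq1 x : 0 < x -> x < 2%:R * PI -> ee x != 1.
Proof.
move=> h0 h1; rewrite /ee eq_complex /=; apply/negP => /andP [/eqP hc /eqP hs].
have hpi := PIgt0.
case: (ltrgtP x PI) => hx.
- have := sin_gt_0 x (elimT RltP h0) (elimT RltP hx). rewrite hs. move/RltP. by rewrite ltxx.
- have h : Rlt x (Rmult (IZR 2) PI).
  { apply/RltP. change (x < IZR 2 * PI). by rewrite IZR2. }
  have := sin_lt_0 x (elimT RltP hx) h. rewrite hs. move/RltP. by rewrite ltxx.
- move: hc; rewrite hx cos_PI => h.
  have : Rlt (IZR (-1)) (IZR 1) by apply: IZR_lt.
  by rewrite h => /Rlt_irrefl.
Qed.
Lemma omegaE p k : omega p k = ee (2%:R * PI / (p ^ k)%:R).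
Proof. by rewrite /omega /ee IZR2. Qed.

Lemma omegaX p k m : omega p k ^+ m = ee (m%:R * (2%:R * PI / (p ^ k)%:R)).
Proof. by rewrite omegaE eeX. Qed.

Lemma omega_eq p k k' m m' : (0 < p)%N -> (m * p ^ k' = m' * p ^ k)%N ->
  omega p k ^+ m = omega p k' ^+ m'.
Proof.
move=> hp h; rewrite !omegaX; congr ee.
have hP : (p ^ k)%:R != 0 :> Rdefinitions.R by rewrite pnatr_eq0 -lt0n expn_gt0 hp.
have hP' : (p ^ k')%:R != 0 :> Rdefinitions.R by rewrite pnatr_eq0 -lt0n expn_gt0 hp.
set c := 2%:R * PI.
have -> : m%:R * (c / (p ^ k)%:R) = (m * p ^ k')%:R * c / ((p ^ k)%:R * (p ^ k')%:R) :> Rdefinitions.R.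
  by rewrite natrM; field; rewrite hP hP'.
have -> : m'%:R * (c / (p ^ k')%:R) = (m' * p ^ k)%:R * c / ((p ^ k)%:R * (p ^ k')%:R) :> Rdefinitions.R.
  by rewrite natrM; field; rewrite hP hP'.
by rewrite h.
Qed.

Lemma omega_root p k : (0 < p)%N -> omega p k ^+ (p ^ k) = 1.
Proof.
move=> hp; rewrite omegaX mulrCA divff ?mulr1 ?ee2PI //.
by rewrite pnatr_eq0 -lt0n expn_gt0 hp.
Qed.

Lemma omega_neq1 p k m : (0 < m < p ^ k)%N -> omega p k ^+ m != 1.
Proof.
move=> /andP [h0 h1]; have hp : (0 < p ^ k)%N by lia.
rewrite omegaX; apply: ee_neq1.
  apply: mulr_gt0; first by rewrite ltr0n.
  by apply: divr_gt0; [apply: mulr_gt0; [rewrite ltr0n | exact: PIgt0] | rewrite ltr0n].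
rewrite mulrA mulrC ltr_pdivrMl ?ltr0n //.
rewrite ltr_pM2r ?ltr_nat //.
by apply: mulr_gt0; [rewrite ltr0n | exact: PIgt0].
Qed.


Section Mat.
Variables (S : comNzRingType) (n : nat).

Definition Cm (t : S) : 'M[S]_n.+1 :=
  \matrix_(r, s) ((((r:nat) == s.+1)%:R : S) + ((((r:nat) == 0%N) && ((s:nat) == n))%:R * t)).

Lemma sum_delta (f : 'I_n.+1 -> S) k :
  \sum_(u < n.+1) f u * ((u:nat) == k)%:R = if (k <= n)%N then f (inord k) else 0.
Proof.
case: leqP => hk.
  rewrite (bigD1 (inord k)) //= inordK // eqxx mulr1 big1 ?addr0 // => u hu.
  have /negbTE -> : (u:nat) != k.
    by apply: contra hu => /eqP hu; apply/eqP/val_inj; rewrite /= inordK // -hu.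
  by rewrite mulr0.
rewrite big1 // => u _; have /negbTE -> : (u:nat) != k.
  by apply/eqP => hu; move: (ltn_ord u); rewrite hu; lia.
by rewrite mulr0.
Qed.

Lemma mulCm (B : 'M[S]_n.+1) t r s :
  (B *m Cm t) r s = if (s:nat) == n then B r 0 * t else B r (inord s.+1).
Proof.
rewrite mxE; under eq_bigr => u _ do rewrite mxE mulrDr.
rewrite big_split /= sum_delta.
case: eqP => hs.
  rewrite hs ltnn add0r.
  under eq_bigr => u _ do rewrite andbT mulrA.
  by rewrite -big_distrl /= sum_delta /= (_ : inord 0 = 0) //; apply/val_inj; rewrite /= inordK.
have -> : (s.+1 <= n)%N by move: (ltn_ord s) hs; lia.
rewrite big1 ?addr0 // => u _; by rewrite andbF mul0r mulr0.
Qed.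

Lemma Cm_exp t k : (k <= n.+1)%N -> forall r s : 'I_n.+1,
  (Cm t ^+ k) r s = if (r:nat) == (s + k)%N then 1 else if (r + n.+1 == s + k)%N then t else 0.
Proof.
elim: k => [|k IH] hk r s.
  rewrite expr0 mxE addn0 eq_sym.
  have -> : (r + n.+1 == s)%N = false by move: (ltn_ord s); lia.
  by rewrite eq_sym; have -> : ((r:nat) == s) = (r == s) by []; case: (r == s).
rewrite exprSr mulCm IH; last by lia.
case: eqP => hs.
  rewrite /= add0n.
  have -> : ((r:nat) == s + k.+1)%N = false by move: (ltn_ord r); lia.
  have -> : (r + n.+1 == k)%N = false by lia.
  have -> : (r + n.+1 == s + k.+1)%N = ((r:nat) == k) by rewrite hs; lia.
  by case: eqP; rewrite ?mul1r ?mul0r.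
rewrite IH; last by lia.
rewrite inordK; last by move: (ltn_ord s) hs; lia.
by rewrite addSnnS.
Qed.

Lemma Cm_expn t : Cm t ^+ n.+1 = t%:M.
Proof.
apply/matrixP => r s; rewrite Cm_exp // mxE.
have -> : ((r:nat) == s + n.+1)%N = false by move: (ltn_ord r); lia.
rewrite eqn_add2r; have -> : ((r:nat) == s) = (r == s) by [].
by case: (r == s).
Qed.

Definition Mx N (c : nat -> S) t : 'M[S]_n.+1 := \sum_(i < N) c i *: Cm t ^+ i.

Section Eig.
Variables (z : 'I_n.+1 -> S) (t : S).
Hypothesis hz : forall j, z j ^+ n.+1 = t.
Definition Em : 'M[S]_n.+1 := \matrix_(j, r) z j ^+ r.

Lemma Em_Cm_exp i j s : (Em *m Cm t ^+ i) j s = z j ^+ i * Em j s.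
Proof.
elim: i j s => [|i IH] j s; first by rewrite expr0 mulmx1 expr0 mul1r.
rewrite exprSr mulmxA mulCm !IH !mxE.
case: eqP => hs.
  by rewrite expr0 mulr1 -(hz j) hs !exprS mulrA [z j * _]mulrC -!mulrA.
by rewrite inordK ?exprS ?mulrA ?[z j * _]mulrC //; move: (ltn_ord s) hs; lia.
Qed.

Lemma Em_Mx N c : Em *m Mx N c t = diag_mx (\row_j \sum_(i < N) c i * z j ^+ i) *m Em.
Proof.
apply/matrixP => j s; rewrite /Mx mulmx_sumr summxE mul_diag_mx mxE [X in X * _]mxE.
rewrite big_distrl /=; apply: eq_bigr => i _.
by rewrite -scalemxAr mxE Em_Cm_exp mulrA.
Qed.

Lemma det_Em_Mx N c : \det Em * \det (Mx N c t) = (\prod_j \sum_(i < N) c i * z j ^+ i) * \det Em.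
Proof.
rewrite -det_mulmx Em_Mx det_mulmx det_diag; congr (_ * _).
by apply: eq_bigr => j _; rewrite mxE.
Qed.

Lemma det_Em : \det Em = \prod_(i < n.+1) \prod_(j < n.+1 | (i < j)%N) (z j - z i).
Proof.
have -> : Em = (Vandermonde n.+1 (\row_j z j))^T by apply/matrixP => j r; rewrite !mxE.
rewrite det_tr det_Vandermonde; apply: eq_bigr => i _; apply: eq_bigr => j _; by rewrite !mxE.
Qed.
End Eig.

End Mat.

Lemma map_Cm (S S' : comNzRingType) n (f : {rmorphism S -> S'}) t :
  map_mx f (Cm n t) = Cm n (f t).
Proof. by apply/matrixP => r s; rewrite !mxE rmorphD rmorphM !rmorph_nat. Qed.

Lemma map_Mx (S S' : comNzRingType) n (f : {rmorphism S -> S'}) N c c' t t' :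
  (forall i, f (c i) = c' i) -> f t = t' ->
  map_mx f (Mx n N c t) = Mx n N c' t'.
Proof.
move=> hc ht; rewrite /Mx map_mx_sum; apply: eq_bigr => i _.
by rewrite map_mxZ hc rmorphXn /= map_Cm ht.
Qed.


Lemma det_exp (R : comNzRingType) n (M : 'M[R]_n.+1) k : \det (M ^+ k) = \det M ^+ k.
Proof. elim: k => [|k IH]; first by rewrite !expr0 det1. by rewrite !exprS detM IH. Qed.

Lemma modp_det (p : nat) (hp : prime p) n (hn : p = n.+1) (F : {poly int}) :
  \det (Mx n (size F) (fun i => (F`_i)%:~R) ('X : {poly 'F_p}))
  = map_poly (fun z : int => z%:~R : 'F_p) F.
Proof.
set A := Cm n ('X : {poly 'F_p}); set N := size F.
pose q : {poly {poly 'F_p}} := \sum_(i < N) (F`_i)%:~R * 'X^i.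
have hM : Mx n N (fun i => (F`_i)%:~R) 'X = horner_mx A q.
  rewrite /Mx /q rmorph_sum; apply: eq_bigr => i _.
  by rewrite rmorphM rmorph_int rmorphXn /= horner_mx_X scaler_int mulrzl.
have chS : p \in [pchar {poly 'F_p}] by rewrite pchar_poly pchar_Fp.
have chT : p \in [pchar {poly {poly 'F_p}}] by rewrite pchar_poly.
have hq : q ^+ p = \sum_(i < N) (F`_i)%:~R * ('X^p)^+i.
  rewrite -(pFrobenius_autE chT) rmorph_sum; apply: eq_bigr => i _.
  by rewrite rmorphM /= (pFrobenius_aut_int chT) pFrobenius_autE -exprM mulnC exprM.
have hF : map_poly (fun z : int => z%:~R : 'F_p) F = \sum_(i < N) (F`_i)%:~R * 'X^i.
  rewrite /map_poly poly_def; apply: eq_bigr => i _.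
  by rewrite -mul_polyC rmorph_int.
have hMp : (Mx n N (fun i => (F`_i)%:~R) 'X) ^+ p = (map_poly (fun z : int => z%:~R : 'F_p) F)%:M.
  rewrite hM -rmorphXn hq rmorph_sum hF rmorph_sum; apply: eq_bigr => i _.
  have e : forall k, k = n.+1 -> A ^+ k = ('X : {poly 'F_p})%:M by move=> k ->; exact: Cm_expn.
  rewrite rmorphM rmorph_int !rmorphXn /= horner_mx_X (e p hn).
  by rewrite rmorphM rmorph_int rmorphXn.
set D := \det _; set G := map_poly _ F.
have : D ^+ p = G ^+ p by rewrite -det_exp hMp det_scalar -hn.
move/eqP; rewrite -subr_eq0 -!(pFrobenius_autE chS) -rmorphB /= pFrobenius_autE expf_eq0.
by rewrite subr_eq0 => /andP [_ /eqP].
Qed.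

Lemma prod_split (a q : nat) (h : nat -> C) :
  \prod_(0 <= m < a * q) h m = \prod_(j < q) \prod_(0 <= l < a) h (a * j + l)%N.
Proof.
elim: q => [|q IH]; first by rewrite muln0 big_ord0 big_geq.
rewrite big_ord_recr /= -IH mulnSr (big_cat_nat _ (n := a * q)) ?leq_addr //=.
congr (_ * _).
rewrite -{1}[(a * q)%N]add0n big_addn addKn; apply: eq_bigr => l _.
by rewrite addnC.
Qed.

Lemma intFp (p : nat) (z : int) : prime p -> (z%:~R : 'F_p) = 0 -> (p %| z)%Z.
Proof.
move=> hp; rewrite dvdzE /=.
have key : forall m : nat, (m%:R : 'F_p) = 0 -> (p %| m)%N.
  move=> m /(congr1 (fun x : 'F_p => x : nat)); rewrite val_Fp_nat //= => hm.
  by apply/dvdnP; exists (m %/ p)%N; rewrite {1}(divn_eq m p) hm addn0.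
case: z => m /=; first by move=> h; apply: key; exact: h.
rewrite NegzE mulrNz => /eqP; rewrite oppr_eq0 => /eqP h.
by apply: key; exact: h.
Qed.

Lemma cube_id (R : comNzRingType) (a b c W : R) : 1 + W + W ^+ 2 = 0 ->
  (a + b + c) * (a + W * b + W ^+ 2 * c) * (a + W ^+ 2 * b + W ^+ 4 * c)
  = a ^+ 3 + b ^+ 3 + c ^+ 3 - 3%:R * a * b * c.
Proof.
move=> hW; apply/eqP; rewrite -subr_eq0; apply/eqP.
transitivity ((1 + W + W ^+ 2) * (0 - (c ^+ 3) + (c ^+ 3 * W ^+ 1) - (c ^+ 3 * W ^+ 3) + (c ^+ 3 * W ^+ 4) + (b ^+ 1 * c ^+ 2 * W ^+ 4) + (b ^+ 2 * c ^+ 1 * W ^+ 3) - (b ^+ 3) + (b ^+ 3 * W ^+ 1) + (a ^+ 1 * c ^+ 2 * W ^+ 2) - (a ^+ 1 * c ^+ 2 * W ^+ 3) + (a ^+ 1 * c ^+ 2 * W ^+ 4) + (3%:R * a ^+ 1 * b ^+ 1 * c ^+ 1) - (2%:R * a ^+ 1 * b ^+ 1 * c ^+ 1 * W ^+ 1) + (a ^+ 1 * b ^+ 1 * c ^+ 1 * W ^+ 2) + (a ^+ 1 * b ^+ 1 * c ^+ 1 * W ^+ 3) + (a ^+ 1 * b ^+ 2 * W ^+ 1) + (a ^+ 2 * c ^+ 1) - (a ^+ 2 * c ^+ 1 * W ^+ 1) + (a ^+ 2 * c ^+ 1 * W ^+ 2) + (a ^+ 2 * b ^+ 1))); last by rewrite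 hW mul0r.
ring.
Qed.

Lemma reindex (p a : nat) (f : nat -> C) : (p %| a)%N ->
  \prod_(1 <= m < (a * p).+1 | ~~ (p %| m)%N) f m
  = \prod_(1 <= l < a.+1 | ~~ (p %| l)%N) \prod_(j < p) f (l + a * j)%N.
Proof.
move=> hpa; rewrite !big_add1 /= !big_mkcond /= prod_split exchange_big /=.
rewrite [in RHS]big_mkcond; apply: eq_bigr => l _ /=.
case: ifP => h.
  apply: eq_bigr => j _.
  have -> : ((a * j + l).+1 = l.+1 + a * j)%N by lia.
  by rewrite dvdn_addl ?h // dvdn_mulr.
apply: big1 => j _.
have -> : ((a * j + l).+1 = l.+1 + a * j)%N by lia.
by rewrite dvdn_addl ?h // dvdn_mulr.
Qed.

Lemma comp_Xn_inj (R : comNzRingType) k (a b : {poly R}) : (0 < k)%N ->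
  a \Po 'X^k = b \Po 'X^k -> a = b.
Proof.
move=> hk h; apply/polyP => i.
have := congr1 (fun q : {poly R} => q`_(i * k)%N) h; rewrite /= !coef_comp_poly_Xn //.
by rewrite dvdn_mull // mulnK.
Qed.

Unset Implicit Arguments.

Theorem lemma2p4 (p : nat) (F : {poly int}) :
  prime p ->
  exists g : {poly int},
    [/\ Hpoly p F = polyC_of_int (g \Po 'X^p),
        (forall i : nat, (g`_i == F`_i %[mod (p%:Z)])%Z),
        (forall i : nat, (2 <= i)%N -> Nk p i F = Nk p i.-1 g),
        (polyC_of_int F).[1] * Nk p 1 F = (g.[1])%:~R
      & (p = 3%N ->
         forall f0 f1 f2 : {poly int},
           F = f0 \Po 'X^3 + 'X * (f1 \Po 'X^3) + 'X^2 * (f2 \Po 'X^3) ->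
           g = f0 ^+ 3 + 'X * f1 ^+ 3 + 'X^2 * f2 ^+ 3 - 3%:R *: ('X * f0 * f1 * f2))].
Proof.
move=> hp.
have p_gt0 := prime_gt0 hp.
have [n hn] : exists n, p = n.+1 by exists p.-1; lia.
subst p.
pose gM := Mx n (size F) (fun i => (F`_i)%:P) ('X : {poly int}).
pose g := \det gM.
exists g.
pose w := omega n.+1 1.
have w_root : w ^+ n.+1 = 1 by rewrite /w -{2}(expn1 n.+1) omega_root.
have w_neq1 : forall m, (0 < m < n.+1)%N -> w ^+ m != 1.
  by move=> m hm; apply: omega_neq1; rewrite expn1.
set pF := polyC_of_int F.
pose z := fun j : 'I_n.+1 => 'X * (w ^+ j)%:P : {poly C}.
have hH : Hpoly n.+1 F = polyC_of_int (g \Po 'X^(n.+1)).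
  have e1 : polyC_of_int (g \Po 'X^(n.+1)) = \det (map_mx (comp_poly 'X^(n.+1)) (map_mx (map_poly (fun z : int => z%:~R : C)) gM)).
    by rewrite !det_map_mx /polyC_of_int map_comp_poly /= map_polyXn.
  have e2 : map_mx (comp_poly 'X^(n.+1)) (map_mx (map_poly (fun z : int => z%:~R : C)) gM)
      = Mx n (size F) (fun i => ((F`_i)%:~R : C)%:P) 'X^(n.+1).
    rewrite (@map_Mx _ _ n _ (size F) _ (fun i => ((F`_i)%:~R : C)%:P) _ 'X); first last.
    - by rewrite /= map_polyX.
    - by move=> i; rewrite /= map_polyC.
    rewrite (@map_Mx _ _ n _ (size F) _ (fun i => ((F`_i)%:~R : C)%:P) _ 'X^(n.+1)) //.
    - by move=> i; rewrite /= comp_polyC.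
    - by rewrite /= comp_polyX.
  rewrite e1 e2.
  have hz : forall j, z j ^+ n.+1 = 'X^(n.+1).
    by move=> j; rewrite /z exprMn -rmorphXn /= -exprM mulnC exprM w_root expr1n mulr1.
  have hdet := det_Em_Mx hz (size F) (fun i => ((F`_i)%:~R : C)%:P).
  have hE : \det (Em z) != 0.
    rewrite det_Em; apply/prodf_neq0 => i _; apply/prodf_neq0 => j hij.
    rewrite /z -mulrBr -polyCB mulf_neq0 ?polyX_eq0 // polyC_eq0 subr_eq0.
    have hw0 : w ^+ i != 0.
      apply: expf_neq0; apply/eqP => w0; move: w_root; rewrite w0 expr0n /= => /eqP.
      by rewrite eq_sym oner_eq0.
    rewrite -(subnKC (ltnW hij)) exprD; apply/eqP => /(congr1 (fun x => x / w ^+ i)).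
    rewrite mulrAC divff // mul1r => /eqP; apply/negP/w_neq1; move: (ltn_ord j) hij; lia.
  apply: (mulfI hE); rewrite hdet mulrC /Hpoly; congr (_ * _).
  apply: eq_bigr => j _; rewrite comp_polyE size_map_inj_poly; last 2 first.
  - by move=> a b /intr_inj.
  - done.
  by apply: eq_bigr => i _; rewrite coef_map /= mul_polyC.
have hpg : polyC_of_int (g \Po 'X^(n.+1)) = polyC_of_int g \Po 'X^(n.+1).
  by rewrite /polyC_of_int map_comp_poly /= map_polyXn.
have hev : forall y : C, (polyC_of_int g).[y ^+ n.+1] = \prod_(j < n.+1) pF.[y * w ^+ j].
  move=> y; rewrite -hornerXn -horner_comp -hpg -hH /Hpoly horner_prod; apply: eq_bigr => j _.
  by rewrite horner_comp hornerM hornerX hornerC.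
split.
- exact: hH.
- move=> i.
  have hd := modp_det hp (erefl n.+1) F.
  have hm : map_mx (map_poly (fun z : int => z%:~R : 'F_n.+1)) gM
      = Mx n (size F) (fun i => (F`_i)%:~R) 'X.
    rewrite (@map_Mx _ _ n _ (size F) _ (fun i => (F`_i)%:~R) _ 'X); first last.
    + by rewrite /= map_polyX.
    + by move=> k; rewrite /= map_polyC rmorph_int.
    + done.
  have e : map_poly (fun z : int => z%:~R : 'F_n.+1) g = map_poly (fun z : int => z%:~R : 'F_n.+1) F.
    by rewrite -hd -hm det_map_mx.
  move/(congr1 (fun q : {poly 'F_n.+1} => q`_i)): e; rewrite !coef_map /= => /eqP.
  rewrite -subr_eq0 -rmorphB /= => /eqP /(intFp hp).
  by rewrite eqz_mod_dvd.
- move=> i hi; have [k ->] : exists k, i = k.+2 by exists i.-2; lia.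
  rewrite /= /Nk.
  set a := (n.+1 ^ k.+1)%N.
  have -> : (n.+1 ^ k.+2 = a * n.+1)%N by rewrite /a expnSr.
  rewrite reindex; last by rewrite /a expnS dvdn_mulr.
  apply: eq_bigr => l _.
  have -> : omega n.+1 k.+1 ^+ l = (omega n.+1 k.+2 ^+ l) ^+ n.+1.
    rewrite -exprM; apply: omega_eq => //; rewrite !expnS; ring.
  rewrite hev; apply: eq_bigr => j _.
  have ej : w ^+ j = omega n.+1 k.+2 ^+ (a * j).
    by apply: omega_eq => //; rewrite /a !expnS expn0; ring.
  by rewrite ej -exprD.
- have e1 : (g.[1])%:~R = (polyC_of_int g).[1].
    have := horner_map (GRing.RMorphism.clone _ _ (fun z : int => z%:~R : C) _) g 1.
    by rewrite /= rmorph1 => <-.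
  rewrite e1 -{2}(expr1n _ n.+1) hev big_ord_recl /= mul1r expr0.
  congr (_ * _); rewrite /Nk expn1 big_mkcond big_nat_recr //= dvdnn /= mulr1.
  rewrite big_add1 /= big_mkord; apply: eq_bigr => i _.
  rewrite ifT ?mul1r //; apply/negP => /(dvdn_leq (ltn0Sn _)).
  by move: (ltn_ord i); lia.
- case=> hn2 f0 f1 f2 hF; subst n.
  apply: (comp_Xn_inj (k := 3)) => //.
  apply: (map_inj_poly (f := fun z : int => z%:~R : C)); [by move=> a b /intr_inj | by []|].
  rewrite -[map_poly _ _]/(polyC_of_int (g \Po 'X^3)) -hH /Hpoly.
  set A := polyC_of_int f0 \Po 'X^3; set B := polyC_of_int f1 \Po 'X^3.
  set Cc := polyC_of_int f2 \Po 'X^3.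
  have hpF : pF = A + 'X * B + 'X^2 * Cc.
    by rewrite /pF hF /polyC_of_int !rmorphD !rmorphM /= !map_comp_poly !map_polyXn map_polyX.
  have hz : forall j, z j ^+ 3 = 'X^3.
    by move=> j; rewrite /z exprMn -rmorphXn /= -exprM mulnC exprM w_root expr1n mulr1.
  have hj : forall j, pF \Po z j = A + z j * B + z j ^+ 2 * Cc.
    move=> j; rewrite hpF !comp_polyD !comp_polyM comp_polyX -expr2.
    have hx : 'X^3 \Po z j = 'X^3.
      by rewrite (rmorphXn (comp_poly (z j))) /= comp_polyX hz.
    by rewrite /A /B /Cc -!comp_polyA hx.
  under eq_bigr => j _ do rewrite hj.
  have hW : 1 + (w%:P : {poly C}) + (w%:P) ^+ 2 = 0.
    have hw1 : w - 1 != 0 by rewrite subr_eq0 -(expr1 w) w_neq1.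
    apply/eqP; rewrite -rmorphXn -!rmorphD polyC_eq0 /=.
    apply/eqP; apply: (mulIf hw1); rewrite mul0r.
    transitivity (w ^+ 3 - 1); first by ring.
    by rewrite w_root subrr.
  rewrite map_comp_poly /= map_polyXn.
  rewrite ?rmorphB ?rmorphD ?rmorphM ?rmorphXn /=.
  rewrite map_polyX comp_polyX map_polyZ comp_polyZ /= ?rmorphM /= map_polyX comp_polyX.
  rewrite -/(polyC_of_int f0) -/(polyC_of_int f1) -/(polyC_of_int f2) -/A -/B -/Cc.
  rewrite !big_ord_recl big_ord0 /z /=.
  rewrite /bump /= !rmorphXn /= -mul_polyC rmorph_int.
  set W := (w%:P : {poly C}).
  have key := cube_id A ('X * B) ('X^2 * Cc) hW.
  transitivity ((A + 'X * B + 'X^2 * Cc) * (A + W * ('X * B) + W ^+ 2 * ('X^2 * Cc))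
     * (A + W ^+ 2 * ('X * B) + W ^+ 4 * ('X^2 * Cc))); first by ring.
  rewrite key; ring.
Qed.
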